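(* Let $n\ge1$, let $\lambda=(\lambda_1\ge\cdots\ge\lambda_n\ge0)$ be a partition (padded with zeros to length $n$), and set $A_{ij}=\lambda_i-\lambda_j+j-i$ for $1\le i<j\le n$. Then $$\sum_{k_1,\dots,k_n\ge0}\Big(\prod_{1\le i<j\le n}\frac{A_{ij}+k_i-k_j}{A_{ij}}\Big)\prod_{i=1}^n\frac{(-(i-1))_{k_i}}{(1)_{k_i}}=\frac{1}{|\mathrm{SST}(\lambda,n)|}=\prod_{1\le i<j\le n}\frac{j-i}{\lambda_i-\lambda_j+j-i},$$ i.e. $F^{(n)}\big((A_{ij})\,|\,(0,-1,\dots,-(n-1))^T\,|\,(1,\dots,1)^T\,|\,(1,\dots,1)^T\big)=1/|\mathrm{SST}(\lambda,n)|$.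
   Context: $(a)_0=1$, $(a)_m=a(a+1)\cdots(a+m-1)$; the sum is finite since $(-(i-1))_{k_i}=0$ for $k_i>i-1$. Holman's function $F^{(n)}\big((A_{ij})\,|\,(a_{i})\,|\,(b_{i})\,|\,(z_i)\big)=\sum_{k_1,\dots,k_n\ge0}\prod_{i<j}\frac{A_{ij}+k_i-k_j}{A_{ij}}\prod_{i}\frac{(a_i)_{k_i}}{(b_i)_{k_i}}z_i^{k_i}$. $\mathrm{SST}(\lambda,n)$ is the set of semistandard tableaux of shape $\lambda$ with entries in $\{1,\dots,n\}$ (rows weakly increasing, columns strictly increasing), whose cardinality is $\prod_{1\le i<j\le n}\frac{\lambda_i-\lambda_j+j-i}{j-i}$. *)

(* Defs.v *)
From mathcomp Require Import all_boot all_order all_algebra.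
Set Implicit Arguments. Unset Strict Implicit. Unset Printing Implicit Defensive.
Import Order.TTheory GRing.Theory Num.Theory.
Local Open Scope ring_scope.

Definition poch (a : rat) (m : nat) : rat := \prod_(t < m) (a + t%:R).

(* A_{ij} = lambda_i - lambda_j + j - i (indices 0-based, difference j-i unchanged). *)
Definition Aij (n : nat) (lam : 'I_n -> nat) (i j : 'I_n) : rat :=
  (lam i)%:R - (lam j)%:R + (j : nat)%:R - (i : nat)%:R.

(* Summand of Holman's series F^{(n)}((A_ij) | a | b | z) at multi-index k. *)
Definition holman_term (n : nat) (A : 'I_n -> 'I_n -> rat)
  (a b z : 'I_n -> rat) (k : 'I_n -> nat) : rat :=
  (\prod_(i < n) \prod_(j < n | (i < j)%N)
      ((A i j + (k i)%:R - (k j)%:R) / A i j))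
  * \prod_(i < n) (poch (a i) (k i) / poch (b i) (k i) * z i ^+ k i).

(* Main.v *)
Require Import Defs.
From mathcomp Require Import all_boot all_order all_algebra.
From mathcomp Require Import all_fingroup ring.
Import Order.TTheory GRing.Theory Num.Theory.
Local Open Scope ring_scope.

Definition T (j m : nat) (z : rat) : rat :=
  \sum_(k < j.+1) (-1) ^+ k * ('C(j, k))%:R * (z - (k : nat)%:R) ^+ m.

Lemma T0 j z : T j 0 z = (j == 0%N)%:R.
Proof.
rewrite /T; under eq_bigr do rewrite expr0 mulr1.
have := exprDn (1 : rat) (-1) j; rewrite subrr expr0n => ->.
by apply: eq_bigr => i _; rewrite expr1n mul1r mulr_natr.
Qed.

Lemma Trec j m z :
  T j.+1 m.+1 z = z * T j.+1 m z + (j.+1)%:R * T j m (z - 1).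
Proof.
have E : T j.+1 m.+1 z = z * T j.+1 m z -
   \sum_(k < j.+2) (-1) ^+ k * ('C(j.+1, k))%:R * (z - (k : nat)%:R) ^+ m * (k : nat)%:R.
  rewrite /T mulr_sumr -sumrB; apply: eq_bigr => k _; rewrite exprSr; ring.
rewrite E big_ord_recl /= mulr0 add0r mulr_sumr -sumrN; congr (_ + _).
rewrite /T mulr_sumr; apply: eq_bigr => i _; rewrite /bump leq0n add1n.
have H : (('C(j.+1, i.+1))%:R * (i.+1)%:R : rat) = (j.+1)%:R * ('C(j, i))%:R.
  by rewrite -!natrM mulnC -mul_bin_diag.
rewrite exprS.
transitivity ((-1) ^+ i * (('C(j.+1, i.+1))%:R * (i.+1)%:R) * (z - 1 - i%:R) ^+ m).
  have -> : z - (i.+1)%:R = z - 1 - i%:R by rewrite -natr1; ring.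
  ring.
rewrite H; ring.
Qed.

Lemma TE m : forall j z, (m <= j)%N -> T j m z = (m == j)%:R * (j`!)%:R.
Proof.
elim: m => [|m IH] j z hj.
  by rewrite T0; case: j {hj} => [|j] //=; rewrite ?mul1r ?mul0r.
case: j hj => [//|j] hj.
rewrite Trec IH; last exact: ltnW. rewrite IH // ltn_eqF // mul0r mulr0 add0r eqSS factS natrM; ring.
Qed.

Lemma pochS a k : poch a k.+1 = poch a k * (a + k%:R).
Proof. by rewrite /poch big_ord_recr. Qed.

Lemma poch1 k : poch 1 k = (k`!)%:R.
Proof.
elim: k => [|k IH]; first by rewrite /poch big_ord0.
by rewrite pochS IH factS natrM mulrC -natr1 addrC.
Qed.

Lemma pochN j k : poch (- (j%:R)) k = (-1) ^+ k * ('C(j, k))%:R * (k`!)%:R.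
Proof.
elim: k => [|k IH]; first by rewrite /poch big_ord0 bin0 expr0 !mul1r.
rewrite pochS IH factS natrM.
have H : (('C(j, k.+1))%:R * (k.+1)%:R : rat) = ('C(j, k))%:R * (j%:R - k%:R).
  case: (leqP k j) => hk.
    by rewrite -natrM mulnC mul_bin_left natrM natrB // mulrC.
  by rewrite !bin_small ?mul0r // ltnW.
transitivity ((-1) ^+ k.+1 * (('C(j, k.+1))%:R * (k.+1)%:R) * (k`!)%:R : rat); last by ring.
rewrite H exprS; ring.
Qed.

Lemma coef_pochE j k : poch (- (j%:R)) k / poch 1 k * 1 ^+ k = (-1) ^+ k * ('C(j, k))%:R.
Proof.
rewrite pochN poch1 expr1n mulr1 mulfK //.
by rewrite pnatr_eq0 -lt0n fact_gt0.
Qed.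

Definition Vp {n} (y : 'I_n -> rat) := \prod_(i < n) \prod_(j < n | (i < j)%N) (y j - y i).

Lemma Vdet n (y : 'I_n -> rat) :
  Vp y = \sum_(s : 'S_n) (-1) ^+ s * \prod_j (y j) ^+ (s j).
Proof.
have := det_Vandermonde (\row_j y j); rewrite -det_tr => E.
rewrite /Vp; transitivity (\prod_(i < n) \prod_(j < n | (i < j)%N) ((\row_j y j) 0 j - (\row_j y j) 0 i)).
  by apply: eq_bigr => i _; apply: eq_bigr => j _; rewrite !mxE.
rewrite -E /determinant; apply: eq_bigr => s _; congr (_ * _).
by apply: eq_bigr => j _; rewrite !mxE.
Qed.

Lemma sumV n (y : 'I_n -> rat) (c : 'I_n -> 'I_n -> rat) :
  \sum_(k : {ffun 'I_n -> 'I_n}) Vp (fun i => y i - (k i : nat)%:R) * \prod_i c i (k i)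
  = \det (\matrix_(m < n, j < n) \sum_(t : 'I_n) c j t * (y j - (t : nat)%:R) ^+ m).
Proof.
rewrite -det_tr /determinant.
under eq_bigr do rewrite Vdet mulr_suml.
rewrite exchange_big /=; apply: eq_bigr => s _.
under eq_bigr do rewrite -mulrA. rewrite -mulr_sumr; congr (_ * _).
transitivity (\prod_j \sum_(t : 'I_n) (c j t * (y j - (t : nat)%:R) ^+ s j)).
  rewrite bigA_distr_bigA /=; apply: eq_bigr => k _.
  by rewrite -big_split /=; apply: eq_bigr => j _; rewrite mulrC.
by apply: eq_bigr => j _; rewrite !mxE.
Qed.

Lemma sum_ord_T n j m z : (j < n)%N ->
  \sum_(t < n) (-1) ^+ t * ('C(j, t))%:R * (z - (t : nat)%:R) ^+ m = T j m z.
Proof.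
move=> hj.
rewrite /T [in RHS](big_ord_widen n (fun t : nat => (-1) ^+ t * ('C(j, t))%:R * (z - t%:R) ^+ m : rat)) //.
rewrite [in RHS]big_mkcond /=; apply: eq_bigr => t _; case: ifP => // /negbT.
by rewrite -leqNgt => h; rewrite bin_small // mulr0 mul0r.
Qed.

Lemma detC n (y : 'I_n -> rat) :
  \det (\matrix_(m < n, j < n) \sum_(t : 'I_n) (-1) ^+ t * ('C(j, t))%:R * (y j - (t : nat)%:R) ^+ m)
  = \prod_(j < n) (j`!)%:R.
Proof.
rewrite det_trig.
  by apply: eq_bigr => j _; rewrite mxE sum_ord_T // TE // eqxx mul1r.
apply/is_trig_mxP => i j hij; rewrite mxE sum_ord_T // TE ?(ltnW hij) //.
by rewrite ltn_eqF // mul0r.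
Qed.

Lemma prod_fact m : \prod_(i < m) ((m%:R - (i : nat)%:R) : rat) = (m`!)%:R.
Proof.
have e : forall a b : nat, ((a.+1)%:R - (b.+1)%:R : rat) = a%:R - b%:R.
  by move=> a b; rewrite -!natr1; ring.
elim: m => [|m IH]; first by rewrite big_ord0.
rewrite big_ord_recl subr0; under eq_bigr do rewrite lift0 e.
by rewrite IH factS natrM.
Qed.

Lemma prod_diff n : \prod_(i < n) \prod_(j < n | (i < j)%N) ((j : nat)%:R - (i : nat)%:R : rat)
  = \prod_(j < n) (j`!)%:R.
Proof.
rewrite (exchange_big_dep xpredT) //=; apply: eq_bigr => j _.
rewrite -(big_ord_widen _ (fun i : nat => (j : nat)%:R - i%:R : rat) (ltnW (ltn_ord j))).
exact: prod_fact.
Qed.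

Theorem theorem3p9 (n : nat) (lam : 'I_n -> nat)
  (hn : (0 < n)%N)
  (hlam : forall i j : 'I_n, (i <= j)%N -> (lam j <= lam i)%N) :
  \sum_(k : {ffun 'I_n -> 'I_n})
     holman_term (Aij lam) (fun i => - (i : nat)%:R) (fun _ => 1) (fun _ => 1)
       (fun i => (k i : nat))
  = \prod_(i < n) \prod_(j < n | (i < j)%N)
      (((j : nat)%:R - (i : nat)%:R) / Aij lam i j).
Proof.
pose u (i : 'I_n) : rat := (i : nat)%:R - (lam i)%:R.
have hA : forall i j, Aij lam i j = u j - u i by move=> i j; rewrite /Aij /u; ring.
have step1 : forall k : {ffun 'I_n -> 'I_n},
  holman_term (Aij lam) (fun i => - (i : nat)%:R) (fun _ => 1) (fun _ => 1)
       (fun i => (k i : nat)) =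
  Vp (fun i => u i - (k i : nat)%:R) / Vp u *
    \prod_i ((-1) ^+ (k i : nat) * ('C(i, k i))%:R).
  move=> k; rewrite /holman_term; congr (_ * _).
    rewrite /Vp -prodf_div; apply: eq_bigr => i _; rewrite -prodf_div.
    by apply: eq_bigr => j _; rewrite hA; congr (_ / _); ring.
  by apply: eq_bigr => i _; exact (coef_pochE i (k i)).
under eq_bigr do rewrite step1 mulrAC.
rewrite -mulr_suml.
rewrite (@sumV n u (fun (j t : 'I_n) => (-1) ^+ (t : nat) * ('C(j, t))%:R)) detC.
rewrite -prod_diff /Vp -prodf_div; apply: eq_bigr => i _; rewrite -prodf_div.
by apply: eq_bigr => j _; rewrite hA.
Qed.
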